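(* Fix an automaton $i$, a start time $t$, a length $h$ and a canonical transition set $\mathcal C_{i,t,h}$. For any state $s\in A$, the set $\{F^h(i,r,s,t): r\in\{0,1\}^h\}$ has at most $|\mathcal C_{i,t,h}|$ elements.
   Context: $A$ is the finite state space of a family of automata; $F^h(i,r,s,t)\in A$ is the state that automaton $i$, starting in state $s$ at time $t$, reaches after reading the bits of $r\in\{0,1\}^h$ at times $t,\dots,t+h-1$. For fixed $i,t,h$, $(s_1,s_2)\sim(s_1',s_2')$ means: for all $r\in\{0,1\}^h$, $F^h(i,r,s_1,t)=s_2\iff F^h(i,r,s_1',t)=s_2'$. A canonical transition set is a set $\mathcal C_{i,t,h}\subseteq A\times A$ such that every pair in $A\times A$ is $\sim$-equivalent to some pair of $\mathcal C_{i,t,h}$. *)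

(* Defs.v *)
From mathcomp Require Import all_boot.
Set Implicit Arguments. Unset Strict Implicit. Unset Printing Implicit Defensive.

(* A family of automata indexed by I, with finite state space A and a
   (possibly time-dependent) one-step transition function
   delta i b s t = state of automaton i after reading bit b in state s at time t. *)

Fixpoint Fseq (I : Type) (A : finType) (delta : I -> bool -> A -> nat -> A)
    (i : I) (r : seq bool) (s : A) (t : nat) : A :=
  match r with
  | [::] => s
  | b :: r' => Fseq delta i r' (delta i b s t) t.+1
  end.

Definition Fh (I : Type) (A : finType) (delta : I -> bool -> A -> nat -> A)
    (h : nat) (i : I) (r : h.-tuple bool) (s : A) (t : nat) : A :=
  Fseq delta i r s t.

Definition trans_equiv (I : Type) (A : finType) (delta : I -> bool -> A -> nat -> A)
    (i : I) (t h : nat) (p q : A * A) : Prop :=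
  forall r : h.-tuple bool,
    Fh delta i r p.1 t = p.2 <-> Fh delta i r q.1 t = q.2.

Definition canonical_transition_set (I : Type) (A : finType)
    (delta : I -> bool -> A -> nat -> A) (i : I) (t h : nat) (C : {set A * A}) : Prop :=
  forall p : A * A, exists2 q, q \in C & trans_equiv delta i t h p q.

(* Main.v *)
Require Import Defs.
From mathcomp Require Import all_boot.

Theorem proposition6p8 (I : Type) (A : finType) (delta : I -> bool -> A -> nat -> A)
    (i : I) (t h : nat) (C : {set A * A}) :
  canonical_transition_set delta i t h C ->
  forall s : A,
    #|[set Fh delta i r s t | r : h.-tuple bool]| <= #|C|.
Proof.
move=> HC s.
pose P (q : A * A) (s2 : A) :=
  [forall r : h.-tuple bool, (Fh delta i r s t == s2) == (Fh delta i r q.1 t == q.2)].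
pose g (q : A * A) := odflt s [pick s2 | P q s2].
apply: leq_trans (leq_imset_card g C).
apply: subset_leq_card; apply/subsetP=> x /imsetP [r _ ->].
have [q qC Hq] := HC (s, Fh delta i r s t).
apply/imsetP; exists q => //.
have Pq : P q (Fh delta i r s t).
  apply/forallP=> r'; apply/eqP; apply/idP/idP => /eqP H; apply/eqP;
    [exact/(Hq r').1 | exact/(Hq r').2].
rewrite /g; case: pickP => [y Py|/(_ (Fh delta i r s t))]; last by rewrite Pq.
move/forallP/(_ r): Py; move/forallP/(_ r): Pq; rewrite eqxx /= => /eqP <-.
by move=> /eqP /eqP.
Qed.
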